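(* For all $\eta,\varepsilon>0$ and $c,p\in\mathbb N$ there exist $\eta'>0$ and $n_0$ such that the following holds for all $n\ge n_0$. Let $H$ be a $3$-graph of order $n$ and let $X,Y\subseteq V(H)$ be disjoint sets that are both $(c,\eta)$-closed in $H$. Suppose there are at least $\varepsilon n^{4p+1}$ $(X,Y)$-bridges of length $p$. Then $X\cup Y$ is $(2c+p,\eta')$-closed in $H$.
   Context: $K_4^-$ is the $3$-graph with $4$ vertices and $3$ edges; a $K_4^-$-factor is a set of vertex-disjoint (not necessarily induced) copies of $K_4^-$ covering all vertices. Let $H$ be a $3$-graph of order $n$. For $c\in\mathbb N$ and vertices $x,y$, a set $S\subseteq V(H)$ is an $(x,y)$-connector of length $c$ if $S\cap\{x,y\}=\emptyset$, $|S|=4c-1$, and both $H[S\cup\{x\}]$ and $H[S\cup\{y\}]$ contain $K_4^-$-factors. Vertices $x,y$ are $(c,\eta)$-close if there are at least $\eta n^{4c-1}$ $(x,y)$-connectors of length $c$ in $H$. A set $U\subseteq V(H)$ is $(c,\eta)$-closed in $H$ if every two vertices of $U$ are $(c,\eta)$-close (connectors may use vertices outside $U$). For $X,Y\subseteq V(H)$, a triple $(x,y,S)$ is an $(X,Y)$-bridge of length $c$ if $x\in X$, $y\in Y$ and $S$ is an $(x,y)$-connector of length $c$. *)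

(* Defs.v *)
From mathcomp Require Import all_boot all_order all_algebra.
Set Implicit Arguments. Unset Strict Implicit. Unset Printing Implicit Defensive.
Import Order.TTheory GRing.Theory Num.Theory.

Definition is_3graph (n : nat) (E : {set {set 'I_n}}) : bool :=
  [forall e in E, #|e| == 3].

(* Q spans a (not necessarily induced) copy of K_4^- : |Q| = 4 and at least
   3 edges of H lie inside Q (a 4-set has exactly 4 triples; K_4^- has 3). *)
Definition K4m_on (n : nat) (E : {set {set 'I_n}}) (Q : {set 'I_n}) : bool :=
  (#|Q| == 4) && (3 <= #|[set e in E | e \subset Q]|).

Definition has_K4m_factor (n : nat) (E : {set {set 'I_n}}) (W : {set 'I_n}) : bool :=
  [exists P : {set {set 'I_n}}, partition P W && [forall Q in P, K4m_on E Q]].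

Definition connector (n : nat) (E : {set {set 'I_n}}) (c : nat)
    (x y : 'I_n) (S : {set 'I_n}) : bool :=
  [&& x \notin S, y \notin S, #|S| == (4 * c - 1)%N,
      has_K4m_factor E (x |: S) & has_K4m_factor E (y |: S)].

Definition close (n : nat) (E : {set {set 'I_n}}) (c : nat) (eta : rat)
    (x y : 'I_n) : Prop :=
  (eta * (n%:R ^+ (4 * c - 1)) <= (#|[set S | connector E c x y S]|)%:R)%R.

Definition closed_set (n : nat) (E : {set {set 'I_n}}) (c : nat) (eta : rat)
    (U : {set 'I_n}) : Prop :=
  forall x y, x \in U -> y \in U -> close E c eta x y.

Definition num_bridges (n : nat) (E : {set {set 'I_n}}) (c : nat)
    (X Y : {set 'I_n}) : nat :=
  #|[set t : 'I_n * 'I_n * {set 'I_n} |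
      [&& t.1.1 \in X, t.1.2 \in Y & connector E c t.1.1 t.1.2 t.2]]|.

(* Main.v *)
Require Import Defs.
From mathcomp Require Import all_boot all_order all_algebra.
From mathcomp Require Import zify lra ring.
Import Order.TTheory GRing.Theory Num.Theory.

Module M1.
Set Implicit Arguments. Unset Strict Implicit. Unset Printing Implicit Defensive.

Section Basics.
Variable n : nat.
Implicit Types (A B C W : {set 'I_n}) (v x y : 'I_n).

Lemma dUl A B C : [disjoint A :|: B & C] = [disjoint A & C] && [disjoint B & C].
Proof. by rewrite -!setI_eq0 setIUl setU_eq0. Qed.
Lemma dUr A B C : [disjoint A & B :|: C] = [disjoint A & B] && [disjoint A & C].
Proof. by rewrite -!setI_eq0 setIUr setU_eq0. Qed.
Lemma d1l x A : [disjoint [set x] & A] = (x \notin A).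
Proof. exact: disjoints1. Qed.
Lemma d1r x A : [disjoint A & [set x]] = (x \notin A).
Proof. by rewrite disjoint_sym disjoints1. Qed.

Lemma bin_le_exp m k : ('C(m, k) <= m ^ k)%N.
Proof.
have h := bin_ffact m k.
have : (m ^_ k <= m ^ k)%N.
  elim: k {h} => [|k IH] //; rewrite ffactnSr expnS mulnC.
  by apply: leq_mul => //; rewrite leq_subr.
rewrite -h => h2; apply: leq_trans h2; by rewrite leq_pmulr ?fact_gt0.
Qed.

Lemma card_sz k : #|[set S : {set 'I_n} | #|S| == k]| = 'C(n, k).
Proof. by rewrite card_draws card_ord. Qed.

Lemma card_sz_le k : (#|[set S : {set 'I_n} | #|S| == k]| <= n ^ k)%N.
Proof. by rewrite card_sz bin_le_exp. Qed.

Lemma card_contain v k :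
  (#|[set S : {set 'I_n} | (#|S| == k) && (v \in S)]| <= n ^ k.-1)%N.
Proof.
apply: leq_trans (card_sz_le k.-1).
rewrite -(card_in_imset (f := fun S => S :\ v)).
  apply: subset_leq_card; apply/subsetP => T /imsetP [S]; rewrite !inE.
  move=> /andP [/eqP hS vS] ->; rewrite (cardsD1 v) vS in hS.
  by rewrite -hS.
move=> S1 S2; rewrite !inE => /andP [_ h1] /andP [_ h2] e.
by rewrite -(setD1K h1) -(setD1K h2) e.
Qed.

Lemma card_bigcup_le (I : finType) (A : {set I}) (Fm : I -> {set {set 'I_n}}) :
  (#|\bigcup_(i in A) Fm i| <= \sum_(i in A) #|Fm i|)%N.
Proof.
elim/big_rec2: _ => [|i U k _ h]; first by rewrite cards0.
apply: leq_trans (leq_card_setU _ _).1 _; exact: leq_add.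
Qed.

Lemma card_meet (F : {set 'I_n}) k :
  (#|[set S : {set 'I_n} | (#|S| == k) && ~~ [disjoint S & F]]| <= #|F| * n ^ k.-1)%N.
Proof.
have -> : [set S : {set 'I_n} | (#|S| == k) && ~~ [disjoint S & F]] =
  \bigcup_(v in F) [set S : {set 'I_n} | (#|S| == k) && (v \in S)].
  apply/setP => S; rewrite inE; apply/andP/bigcupP.
    move=> [hk /pred0Pn [v /andP [vS vF]]]; exists v => //; by rewrite inE hk.
  move=> [v vF]; rewrite inE => /andP [hk vS]; split => //.
  by apply/pred0Pn; exists v; apply/andP.
apply: leq_trans (card_bigcup_le _ _) _.
rewrite -sum_nat_const; apply: leq_sum => v _; exact: card_contain.
Qed.

End Basics.

End M1.
Import M1.

Module M2.
Set Implicit Arguments. Unset Strict Implicit. Unset Printing Implicit Defensive.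

Section Fac.
Variable n : nat.
Variable E : {set {set 'I_n}}.
Implicit Types (A B C W : {set 'I_n}) (v x y : 'I_n).

Lemma factorU W1 W2 : has_K4m_factor E W1 -> has_K4m_factor E W2 ->
  [disjoint W1 & W2] -> has_K4m_factor E (W1 :|: W2).
Proof.
move=> /existsP [P1 /andP [/and3P [/eqP c1 t1 z1] q1]].
move=> /existsP [P2 /andP [/and3P [/eqP c2 t2 z2] q2]] d.
apply/existsP; exists (P1 :|: P2); apply/andP; split.
  apply/and3P; split.
  - by rewrite /cover bigcup_setU -/(cover P1) -/(cover P2) c1 c2.
  - apply/trivIsetP => A B; rewrite !inE.
    have sub1 : forall Q, Q \in P1 -> Q \subset W1.
      by move=> Q hQ; rewrite -c1; apply: bigcup_sup hQ.
    have sub2 : forall Q, Q \in P2 -> Q \subset W2.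
      by move=> Q hQ; rewrite -c2; apply: bigcup_sup hQ.
    case/orP => hA; case/orP => hB neq.
    + by move/trivIsetP: t1; apply.
    + apply: disjointWl (sub1 _ hA) _; apply: disjointWr (sub2 _ hB) d.
    + rewrite disjoint_sym.
      apply: disjointWl (sub1 _ hB) _; apply: disjointWr (sub2 _ hA) d.
    + by move/trivIsetP: t2; apply.
  - by rewrite inE negb_or z1 z2.
apply/forall_inP => Q; rewrite inE => /orP [h|h].
  exact: (forall_inP q1).
exact: (forall_inP q2).
Qed.

Lemma factor_card W v : v \in W -> has_K4m_factor E W -> (4 <= #|W|)%N.
Proof.
move=> vW /existsP [P /andP [/and3P [/eqP c _ _] q]].
move: vW; rewrite -c => /bigcupP [Q hQ vQ].
have /andP [/eqP h4 _] := forall_inP q Q hQ.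
rewrite -h4; apply: subset_leq_card; exact: bigcup_sup hQ.
Qed.

Lemma connector_sym k x y S : connector E k x y S = connector E k y x S.
Proof.
rewrite /connector; apply/idP/idP => /and5P [a b c d e]; apply/and5P; by split.
Qed.

Lemma connector_k1 k x y S : connector E k x y S -> (1 <= k)%N.
Proof.
move=> /and5P [xS _ /eqP hS fx _].
have := factor_card (setU11 x S) fx.
rewrite cardsU1 xS hS; case: k {hS} => //.
Qed.

Lemma connector_size k x y S : connector E k x y S -> #|S| = (4 * k - 1)%N.
Proof. by move=> /and5P [_ _ /eqP h _ _]. Qed.

End Fac.

End M2.
Import M2.

Module M3.
Set Implicit Arguments. Unset Strict Implicit. Unset Printing Implicit Defensive.

Lemma card_dep (T1 T2 : finType) (A : {set T1}) (Bf : T1 -> {set T2}) :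
  #|[set u : T1 * T2 | (u.1 \in A) && (u.2 \in Bf u.1)]| = (\sum_(t in A) #|Bf t|)%N.
Proof.
transitivity (\sum_(u : T1 * T2) nat_of_bool ((u.1 \in A) && (u.2 \in Bf u.1)))%N.
  rewrite -sum1_card big_mkcond /=; apply: eq_bigr => u _; rewrite inE; by case: ifP.
rewrite -(pair_big xpredT xpredT (fun i j => nat_of_bool ((i \in A) && (j \in Bf i)))) /=.
rewrite [RHS]big_mkcond /=; apply: eq_bigr => i _; case: (i \in A) => /=.
  rewrite -sum1_card [RHS]big_mkcond /=; apply: eq_bigr => j _; by case: (j \in Bf i).
by rewrite big1.
Qed.

Lemma card_fibers (T1 T2 : finType) (G : {set T1}) (f : T1 -> T2) (K : nat) (C : {set T2}) :
  (forall u, u \in G -> f u \in C) ->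
  (forall T, #|[set u in G | f u == T]| <= K)%N ->
  (#|G| <= K * #|C|)%N.
Proof.
move=> hC hK.
rewrite -sum1_card (partition_big_imset f) /=.
apply: (@leq_trans (\sum_(T in f @: G) K)%N).
  apply: leq_sum => T _; rewrite sum1dep_card. exact: hK.
rewrite sum_nat_const mulnC leq_mul2l; apply/orP; right.
apply: subset_leq_card; apply/subsetP => T /imsetP [u uG ->]; exact: hC.
Qed.

End M3.
Import M3.

Module M4.
Set Implicit Arguments. Unset Strict Implicit. Unset Printing Implicit Defensive.
Local Open Scope ring_scope.

Section Avoid.
Variable n : nat.

Lemma avoid (Q : pred {set 'I_n}) (a : nat) (F : {set 'I_n}) (f : nat) (eta : rat) :
  (1 <= a)%N -> (forall S, Q S -> #|S| = a) -> (#|F| <= f)%N ->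
  (2 * f)%:R <= eta * n%:R ->
  eta * n%:R ^+ a <= #|[set S | Q S]|%:R ->
  eta / 2 * n%:R ^+ a <= #|[set S | Q S && [disjoint S & F]]|%:R.
Proof.
move=> a1 hQ hF hf hA.
have h1 : (#|[set S | Q S]| <= #|[set S | Q S && [disjoint S & F]]| + f * n ^ a.-1)%N.
  apply: (@leq_trans (#|[set S | Q S && [disjoint S & F]] :|:
      [set S : {set 'I_n} | (#|S| == a) && ~~ [disjoint S & F]]|)).
    apply: subset_leq_card; apply/subsetP => S; rewrite !inE => qS.
    by rewrite qS hQ // eqxx /=; case: [disjoint S & F].
  apply: leq_trans (leq_card_setU _ _).1 _; rewrite leq_add2l.
  apply: leq_trans (card_meet F a) _; by rewrite leq_mul2r hF orbT.
have h2 : (#|[set S | Q S]|%:R : rat) <= #|[set S | Q S && [disjoint S & F]]|%:R + f%:R * n%:R ^+ a.-1.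
  by rewrite -natrX -natrM -natrD ler_nat.
have ea : n%:R ^+ a = n%:R * n%:R ^+ a.-1 :> rat by rewrite -exprS prednK.
rewrite ea in hA *.
have X0 : 0 <= n%:R ^+ a.-1 :> rat by rewrite exprn_ge0.
have h3 : (2 * f)%:R * n%:R ^+ a.-1 <= eta * n%:R * n%:R ^+ a.-1 :> rat.
  exact: ler_wpM2r.
move: h3; rewrite natrM => h3.
lra.
Qed.
End Avoid.

End M4.
Import M4.

Module M5.
Set Implicit Arguments. Unset Strict Implicit. Unset Printing Implicit Defensive.

Section Bad.
Variable n : nat.
Definition BT := ('I_n * 'I_n * {set 'I_n})%type.
Definition Ft (t : BT) : {set 'I_n} := t.1.1 |: (t.1.2 |: t.2).

Lemma bad_bridges (F : {set 'I_n}) b : (1 <= b)%N ->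
  (#|[set t : BT | (#|t.2| == b) && ~~ [disjoint F & Ft t]]| <= 3 * #|F| * n ^ b.+1)%N.
Proof.
move=> b1.
set Sb := [set S : {set 'I_n} | #|S| == b].
set U1 := setX (setX F [set: 'I_n]) Sb.
set U2 := setX (setX [set: 'I_n] F) Sb.
set U3 := setX (setX [set: 'I_n] [set: 'I_n])
   [set S : {set 'I_n} | (#|S| == b) && ~~ [disjoint S & F]].
apply: (@leq_trans #|U1 :|: (U2 :|: U3)|).
  apply: subset_leq_card; apply/subsetP => [[[x' y'] S]].
  rewrite /Ft !inE /= => /andP [hb].
  rewrite dUr dUr d1r d1r disjoint_sym hb /= !negb_and !negbK.
  by case/or3P => ->; rewrite ?orbT.
apply: leq_trans (leq_card_setU _ _).1 _.
apply: leq_trans (leq_add (leqnn _) (leq_card_setU _ _).1) _.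
rewrite !cardsX cardsT card_ord.
have e1 : (#|Sb| <= n ^ b)%N by exact: card_sz_le.
have e2 := card_meet F b.
have eb : (n ^ b.+1 = n * n ^ b)%N by rewrite expnS.
have eb2 : (n ^ b = n * n ^ b.-1)%N by rewrite -expnS prednK.
rewrite eb.
have h1 : (#|F| * n * #|Sb| <= #|F| * (n * n ^ b))%N.
  by rewrite -mulnA leq_mul2l leq_mul2l e1 !orbT.
have h2 : (n * #|F| * #|Sb| <= #|F| * (n * n ^ b))%N.
  by rewrite (mulnC n) -mulnA leq_mul2l leq_mul2l e1 !orbT.
have h3 : (n * n * #|[set S : {set 'I_n} | (#|S| == b) && ~~ [disjoint S & F]]|
     <= #|F| * (n * n ^ b))%N.
  apply: leq_trans (leq_mul (leqnn _) e2) _.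
  rewrite eb2; nia.
lia.
Qed.
End Bad.

End M5.
Import M5.

Module M6.
Set Implicit Arguments. Unset Strict Implicit. Unset Printing Implicit Defensive.
Local Open Scope ring_scope.

Definition Tof n (t : BT n) (S1 S2 : {set 'I_n}) : {set 'I_n} :=
  S1 :|: ((t.1.1 |: t.2) :|: (t.1.2 |: S2)).
Definition Km (m : nat) : nat := (m * m * 2 ^ m * 2 ^ m * 2 ^ m)%N.

Lemma Km_mono m1 m2 : (m1 <= m2)%N -> (Km m1 <= Km m2)%N.
Proof.
move=> h; rewrite /Km.
have e : (2 ^ m1 <= 2 ^ m2)%N by rewrite leq_pexp2l.
by repeat apply: leq_mul.
Qed.

Lemma card_U1_le n (v : 'I_n) (A : {set 'I_n}) : (#|v |: A| <= #|A|.+1)%N.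
Proof. by rewrite cardsU1; case: (v \notin A). Qed.

Lemma ar1 a b : (a + (b.+1 + a.+1) <= 2 * a + b + 2)%N.
Proof. lia. Qed.

Section Count.
Variable n : nat.

Lemma count_main (x y : 'I_n) (B : {set BT n})
  (P1 P2 : 'I_n -> {set 'I_n} -> bool) (a b : nat) (eps eta : rat)
  (Conn : {set {set 'I_n}}) :
  (1 <= a)%N -> (1 <= b)%N -> 0 < eps -> 0 < eta ->
  12%:R <= eps * n%:R -> (2 * (a + b + 4))%:R <= eta * n%:R ->
  (forall t, t \in B -> #|t.2| = b) ->
  (forall t, t \in B -> eta * n%:R ^+ a <= #|[set S | P1 t.1.1 S]|%:R) ->
  (forall t, t \in B -> eta * n%:R ^+ a <= #|[set S | P2 t.1.2 S]|%:R) ->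
  (forall v S, P1 v S -> #|S| = a) -> (forall v S, P2 v S -> #|S| = a) ->
  eps * n%:R ^+ (b + 2) <= #|B|%:R ->
  (forall t S1 S2, t \in B -> P1 t.1.1 S1 -> P2 t.1.2 S2 ->
     [disjoint [set x; y] & Ft t] ->
     [disjoint S1 & [set x; y] :|: Ft t] ->
     [disjoint S2 & ([set x; y] :|: Ft t) :|: S1] -> Tof t S1 S2 \in Conn) ->
  eps / 2 * (eta / 2) ^+ 2 * n%:R ^+ (2 * a + b + 2) <=
    (Km (2 * a + b + 2))%:R * #|Conn|%:R.
Proof.
move=> a1 b1 eps0 eta0 hn1 hn2 hBb hP1 hP2 sP1 sP2 hB hconn.
set N : rat := n%:R.
have N0 : 0 <= N by rewrite /N ler0n.
set F0 := [set x; y].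
have cF0 : (#|F0| <= 2)%N by rewrite cards2; case: (x != y).
have cFt : forall t, t \in B -> (#|Ft t| <= b + 2)%N.
  move=> t tB; rewrite /Ft; have h1 := card_U1_le t.1.1 (t.1.2 |: t.2).
  have h2 := card_U1_le t.1.2 t.2; rewrite hBb // in h2. apply: leq_trans h1 _; by rewrite addn2 ltnS.
set B' := [set t in B | [disjoint F0 & Ft t]].
have hBB : (#|B| <= #|B'| + 6 * n ^ b.+1)%N.
  apply: (@leq_trans #|B' :|: [set t : BT n | (#|t.2| == b) && ~~ [disjoint F0 & Ft t]]|).
    apply: subset_leq_card; apply/subsetP => t tB; rewrite !inE tB hBb // eqxx /=.
    by case: [disjoint F0 & Ft t].
  apply: leq_trans (leq_card_setU _ _).1 _; rewrite leq_add2l.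
  apply: leq_trans (bad_bridges _ b1) _.
  rewrite leq_mul2r; apply/orP; right; by rewrite (leq_mul2l 3 _ 2) cF0 orbT.
have hB' : eps / 2 * N ^+ (b + 2) <= #|B'|%:R.
  have h1 : #|B|%:R <= #|B'|%:R + 6%:R * N ^+ b.+1.
    by rewrite /N -natrX -natrM -natrD ler_nat.
  have e2 : N ^+ (b + 2) = N * N ^+ b.+1 by rewrite addn2 exprS.
  rewrite e2 in hB *.
  have X0 : 0 <= N ^+ b.+1 by rewrite exprn_ge0.
  have h3 : 12%:R * N ^+ b.+1 <= eps * N * N ^+ b.+1 by exact: ler_wpM2r.
  have e12 : (12%:R : rat) = 2 * 6%:R by rewrite -natrM.
  rewrite e12 in h3.
  lra.
set A1 := fun t : BT n => [set S | P1 t.1.1 S && [disjoint S & F0 :|: Ft t]].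
have hA1 : forall t, t \in B' -> eta / 2 * N ^+ a <= #|A1 t|%:R.
  move=> t; rewrite inE => /andP [tB _].
  apply: (avoid (f := (a + b + 4)%N)) => //.
  - exact: sP1.
  - apply: leq_trans (leq_card_setU _ _).1 _.
    apply: leq_trans (leq_add cF0 (cFt t tB)) _; lia.
  - exact: hP1.
set A2 := fun (t : BT n) S1 =>
  [set S | P2 t.1.2 S && [disjoint S & (F0 :|: Ft t) :|: S1]].
have hA2 : forall t S1, t \in B' -> S1 \in A1 t -> eta / 2 * N ^+ a <= #|A2 t S1|%:R.
  move=> t S1; rewrite inE => /andP [tB _]; rewrite inE => /andP [pS1 _].
  apply: (avoid (f := (a + b + 4)%N)) => //.
  - exact: sP2.
  - apply: leq_trans (leq_card_setU _ _).1 _.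
    rewrite (sP1 _ _ pS1).
    apply: leq_trans (leq_add (leq_card_setU _ _).1 (leqnn a)) _.
    apply: leq_trans (leq_add (leq_add cF0 (cFt t tB)) (leqnn a)) _; lia.
  - exact: hP2.
set G1 := [set w : BT n * {set 'I_n} | (w.1 \in B') && (w.2 \in A1 w.1)].
set G := [set u : BT n * {set 'I_n} * {set 'I_n} |
            (u.1 \in G1) && (u.2 \in A2 u.1.1 u.1.2)].
have hG1 : #|B'|%:R * (eta / 2 * N ^+ a) <= #|G1|%:R.
  rewrite /G1 card_dep natr_sum mulrC mulr_natr -sumr_const.
  by apply: ler_sum => t tB; apply: hA1.
have hG : #|G1|%:R * (eta / 2 * N ^+ a) <= #|G|%:R.
  rewrite /G (card_dep G1 (fun w => A2 w.1 w.2)) natr_sum mulrC mulr_natr -sumr_const.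
  apply: ler_sum => w; rewrite inE => /andP [h1 h2]; exact: hA2.
set m := (2 * a + b + 2)%N.
have hGC : (#|G| <= Km m * #|Conn|)%N.
  pose f := fun u : BT n * {set 'I_n} * {set 'I_n} => Tof u.1.1 u.1.2 u.2.
  apply: (card_fibers (f := f)).
    move=> [[t S1] S2]; rewrite !inE /= => /andP [/andP [/andP [tB d0] /andP [p1 d1]] /andP [p2 d2]].
    exact: hconn.
  move=> T; case: (set_0Vmem [set u in G | f u == T]) => [-> | [u0 hu0]].
    by rewrite cards0.
  have sz : forall u, u \in G -> (#|f u| <= m)%N.
    move=> [[t S1] S2]; rewrite !inE /= => /andP [/andP [/andP [tB d0] /andP [p1 d1]] /andP [p2 d2]].
    rewrite /f /Tof /=.
    apply: leq_trans (leq_card_setU _ _).1 _.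
    have h := leq_trans (leq_card_setU (t.1.1 |: t.2) (t.1.2 |: S2)).1
       (leq_add (card_U1_le t.1.1 t.2) (card_U1_le t.1.2 S2)).
    apply: leq_trans (leq_add (leqnn _) h) _.
    rewrite (sP1 _ _ p1) (sP2 _ _ p2) hBb // /m.
    exact: ar1.
  move: hu0; rewrite inE => /andP [u0G /eqP fu0].
  apply: (@leq_trans #|setX (setX (setX (setX T T) (powerset T)) (powerset T)) (powerset T)|).
    apply: subset_leq_card; apply/subsetP => [[[[[x' y'] S] S1] S2]].
    rewrite inE => /andP [_ /eqP <-]; rewrite /f /Tof /= !in_setX /= !powersetE.
    rewrite !inE !eqxx !orbT /=.
    by apply/andP; split; [apply/andP; split|]; apply/subsetP => v hv; rewrite !inE hv ?orbT.
  rewrite !cardsX !card_powerset; apply: (Km_mono (m1 := #|T|)).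
  rewrite -fu0; exact: sz.
have hGC' : #|G|%:R <= (Km m)%:R * #|Conn|%:R :> rat.
  by rewrite -natrM ler_nat.
apply: le_trans hGC'.
apply: le_trans hG.
have P0 : 0 <= eta / 2 * N ^+ a.
  by apply: mulr_ge0; [lra | rewrite exprn_ge0].
apply: le_trans (ler_wpM2r P0 hG1).
apply: le_trans (ler_wpM2r P0 (ler_wpM2r P0 hB')).
have -> : N ^+ (2 * a + b + 2) = N ^+ (b + 2) * N ^+ a * N ^+ a.
  by rewrite -!exprD; congr (_ ^+ _); lia.
by rewrite le_eqVlt; apply/orP; left; apply/eqP; field.
Qed.
End Count.

End M6.
Import M6.

Module M7.
Set Implicit Arguments. Unset Strict Implicit. Unset Printing Implicit Defensive.

Ltac fin := repeat (apply/andP; split);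
  solve [done | rewrite eq_sym; done | rewrite disjoint_sym; done].

Lemma ar2 a b : (a + (true + b + (true + a)) = 2 * a + b + 2)%N.
Proof. simpl; lia. Qed.

Section Asm.
Variable n : nat.
Variable E : {set {set 'I_n}}.

Lemma factorU3 (W1 W2 W3 : {set 'I_n}) : has_K4m_factor E W1 -> has_K4m_factor E W2 ->
  has_K4m_factor E W3 -> [disjoint W1 & W2] -> [disjoint W1 & W3] ->
  [disjoint W2 & W3] -> has_K4m_factor E (W1 :|: (W2 :|: W3)).
Proof.
move=> f1 f2 f3 d12 d13 d23; apply: factorU => //; first exact: factorU.
by rewrite dUr d12 d13.
Qed.

Definition sep (z x' y' : 'I_n) (S1 S S2 : {set 'I_n}) : Prop :=
  [/\ [/\ z != x', z != y' & x' != y'], [/\ z \notin S1, z \notin S & z \notin S2],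
      [/\ x' \notin S1, x' \notin S & x' \notin S2],
      [/\ y' \notin S1, y' \notin S & y' \notin S2] &
      [/\ [disjoint S1 & S], [disjoint S1 & S2] & [disjoint S & S2]]].

Lemma assembleA z x' y' S1 S S2 : sep z x' y' S1 S S2 ->
  has_K4m_factor E (z |: S1) -> has_K4m_factor E (x' |: S) ->
  has_K4m_factor E (y' |: S2) ->
  has_K4m_factor E (z |: (S1 :|: ((x' |: S) :|: (y' |: S2)))).
Proof.
move=> [[a1 a2 a3] [b1 b2 b3] [c1 c2 c3] [e1 e2 e3] [g1 g2 g3]] f1 f2 f3.
rewrite (setUA [set z]); apply: (factorU3 f1 f2 f3);
  rewrite !dUl !dUr !d1l !d1r !in_set1; fin.
Qed.

Lemma assembleB z x' y' S1 S S2 : sep z x' y' S1 S S2 ->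
  has_K4m_factor E (x' |: S1) -> has_K4m_factor E (y' |: S) ->
  has_K4m_factor E (z |: S2) ->
  has_K4m_factor E (z |: (S1 :|: ((x' |: S) :|: (y' |: S2)))).
Proof.
move=> [[a1 a2 a3] [b1 b2 b3] [c1 c2 c3] [e1 e2 e3] [g1 g2 g3]] f1 f2 f3.
have -> : z |: (S1 :|: ((x' |: S) :|: (y' |: S2))) =
          (x' |: S1) :|: ((y' |: S) :|: (z |: S2)).
  apply/setP => v; rewrite !inE.
  move: (v == z) (v == x') (v == y') (v \in S1) (v \in S) (v \in S2).
  by do 6!case.
apply: (factorU3 f1 f2 f3);
  rewrite !dUl !dUr !d1l !d1r !in_set1; fin.
Qed.

Lemma cardsU_disj (A B : {set 'I_n}) : [disjoint A & B] -> #|A :|: B| = (#|A| + #|B|)%N.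
Proof. by move=> d; rewrite cardsU (disjoint_setI0 d) cards0 subn0. Qed.

Lemma conn_build k x y x' y' S1 S S2 a b :
  sep x x' y' S1 S S2 -> sep y x' y' S1 S S2 ->
  #|S1| = a -> #|S| = b -> #|S2| = a -> (4 * k - 1 = 2 * a + b + 2)%N ->
  has_K4m_factor E (x |: (S1 :|: ((x' |: S) :|: (y' |: S2)))) ->
  has_K4m_factor E (y |: (S1 :|: ((x' |: S) :|: (y' |: S2)))) ->
  connector E k x y (S1 :|: ((x' |: S) :|: (y' |: S2))).
Proof.
move=> [[a1 a2 a3] [b1 b2 b3] [c1 c2 c3] [e1 e2 e3] [g1 g2 g3]].
move=> [[a1' a2' a3'] [b1' b2' b3'] _ _ _] h1 h2 h3 hk fx fy.
apply/and5P; split => //.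
- by rewrite !inE negb_or b1 negb_or negb_or a1 b2 negb_or a2 b3.
- by rewrite !inE negb_or b1' negb_or negb_or a1' b2' negb_or a2' b3'.
- rewrite hk cardsU_disj; last by rewrite dUr !dUr !d1r; fin.
  rewrite cardsU_disj; last by rewrite !dUl !dUr !d1l !d1r !in_set1; fin.
  rewrite !cardsU1 c2 e3 h1 h2 h3; apply/eqP.
  exact: ar2.
Qed.
End Asm.

Ltac splitH := repeat match goal with H : is_true (_ && _) |- _ => case/andP: H => ? ? end.

Lemma get_sep n (x y x' y' : 'I_n) (S S1 S2 : {set 'I_n}) : x' \notin S -> y' \notin S -> x' != y' ->
  [disjoint [set x; y] & (x' |: (y' |: S))] ->
  [disjoint S1 & [set x; y] :|: (x' |: (y' |: S))] ->
  [disjoint S2 & ([set x; y] :|: (x' |: (y' |: S))) :|: S1] ->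
  sep x x' y' S1 S S2 /\ sep y x' y' S1 S S2.
Proof.
move=> h1 h2 h3 d0 d1 d2.
move: d0 d1 d2; rewrite !dUl !dUr !d1l !d1r !inE => d0 d1 d2.
splitH.
by split; split; split; fin.
Qed.

End M7.
Import M7.

Module M8.
Set Implicit Arguments. Unset Strict Implicit. Unset Printing Implicit Defensive.
Local Open Scope ring_scope.

Lemma close_sym n (E : {set {set 'I_n}}) k eta x y : close E k eta x y -> close E k eta y x.
Proof.
rewrite /close.
have -> : [set S | connector E k y x S] = [set S | connector E k x y S].
  by apply/setP => S; rewrite !inE connector_sym.
by [].
Qed.

Lemma conn_fac n (E : {set {set 'I_n}}) k x y S : connector E k x y S ->
  has_K4m_factor E (x |: S) /\ has_K4m_factor E (y |: S).
Proof. by move=> /and5P [_ _ _ h1 h2]. Qed.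

Lemma ar3 c p : (1 <= c)%N -> (1 <= p)%N ->
  (4 * (2 * c + p) - 1 = 2 * (4 * c - 1) + (4 * p - 1) + 2)%N.
Proof. lia. Qed.

Lemma ar4 p : (1 <= p)%N -> (4 * p - 1 + 2 = 4 * p + 1)%N.
Proof. lia. Qed.

Lemma case_gen n (E : {set {set 'I_n}}) (X Y : {set 'I_n}) c p (eps eta : rat)
  (x y : 'I_n) (P1 P2 : 'I_n -> {set 'I_n} -> bool) :
  (1 <= c)%N -> (1 <= p)%N -> 0 < eps -> 0 < eta ->
  12%:R <= eps * n%:R ->
  (2 * ((4 * c - 1) + (4 * p - 1) + 4))%:R <= eta * n%:R ->
  [disjoint X & Y] ->
  eps * n%:R ^+ (4 * p + 1) <= (num_bridges E p X Y)%:R ->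
  (forall x' y' S, x' \in X -> y' \in Y -> connector E p x' y' S ->
     eta * n%:R ^+ (4 * c - 1) <= #|[set S1 | P1 x' S1]|%:R) ->
  (forall x' y' S, x' \in X -> y' \in Y -> connector E p x' y' S ->
     eta * n%:R ^+ (4 * c - 1) <= #|[set S2 | P2 y' S2]|%:R) ->
  (forall v S, P1 v S -> #|S| = (4 * c - 1)%N) ->
  (forall v S, P2 v S -> #|S| = (4 * c - 1)%N) ->
  (forall x' y' S S1 S2, x' \in X -> y' \in Y -> connector E p x' y' S ->
     P1 x' S1 -> P2 y' S2 -> sep x x' y' S1 S S2 -> sep y x' y' S1 S S2 ->
     connector E (2 * c + p) x y (S1 :|: ((x' |: S) :|: (y' |: S2)))) ->
  close E (2 * c + p)
    (eps / 2 * (eta / 2) ^+ 2 / (Km (2 * (4 * c - 1) + (4 * p - 1) + 2)).+1%:R) x y.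
Proof.
move=> c1 p1 eps0 eta0 hn1 hn2 hXY hbr hP1 hP2 sP1 sP2 hC.
set a := (4 * c - 1)%N in hn2 hP1 hP2 sP1 sP2 *.
set b := (4 * p - 1)%N in hn2 *.
set B := [set t : BT n | [&& t.1.1 \in X, t.1.2 \in Y & connector E p t.1.1 t.1.2 t.2]].
set Conn := [set T | connector E (2 * c + p) x y T].
have key := @count_main n x y B P1 P2 a b eps eta Conn.
have a1 : (1 <= a)%N by rewrite /a; lia.
have b1 : (1 <= b)%N by rewrite /b; lia.
have := key a1 b1 eps0 eta0 hn1 hn2.
have memB : forall t, t \in B -> [/\ t.1.1 \in X, t.1.2 \in Y & connector E p t.1.1 t.1.2 t.2].
  by move=> t; rewrite inE => /and3P.
move=> {}key; have {}key := key (fun t tB => let: And3 _ _ h := memB t tB in connector_size h).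
have {}key := key (fun t tB => let: And3 h1 h2 h3 := memB t tB in hP1 _ _ _ h1 h2 h3).
have {}key := key (fun t tB => let: And3 h1 h2 h3 := memB t tB in hP2 _ _ _ h1 h2 h3).
have {}key := key sP1 sP2.
have hB : eps * n%:R ^+ (b + 2) <= #|B|%:R by rewrite /b ar4.
have {}key := key hB.
have hconn : forall t S1 S2, t \in B -> P1 t.1.1 S1 -> P2 t.1.2 S2 ->
     [disjoint [set x; y] & Ft t] ->
     [disjoint S1 & [set x; y] :|: Ft t] ->
     [disjoint S2 & ([set x; y] :|: Ft t) :|: S1] -> Tof t S1 S2 \in Conn.
  move=> [[x' y'] S] S1 S2 tB q1 q2 d0 d1 d2.
  have [hx hy hcon] := memB _ tB; rewrite /= in hx hy hcon q1 q2.
  have /and5P [nx ny _ _ _] := hcon.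
  have nxy : x' != y'.
    apply/negP => /eqP e; move: hXY; rewrite -setI_eq0 => /eqP hI.
    have : x' \in X :&: Y by rewrite inE hx e hy.
    by rewrite hI inE.
  have [s1 s2] := get_sep nx ny nxy d0 d1 d2.
  rewrite inE; exact: hC.
have {}key := key hconn.
rewrite /close -/Conn ar3 //.
set K := Km _ in key *.
set L := eps / 2 * (eta / 2) ^+ 2 * n%:R ^+ (2 * a + b + 2) in key.
have K0 : (0 : rat) < K.+1%:R by rewrite ltr0n.
have -> : eps / 2 * (eta / 2) ^+ 2 / K.+1%:R * n%:R ^+ (2 * a + b + 2) = L / K.+1%:R.
  by rewrite /L; field; rewrite -natr1 addrC in K0; rewrite gt_eqF.
rewrite ler_pdivrMr //.
apply: le_trans key _.
by rewrite mulrC -natrM -natrM ler_nat leq_mul2l leqnSn orbT.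
Qed.

End M8.
Import M8.

Local Open Scope ring_scope.

Theorem lemma5p3 :
  forall (eta eps : rat) (c p : nat), 0 < eta -> 0 < eps ->
  exists (eta' : rat) (n0 : nat), 0 < eta' /\
  forall (n : nat) (E : {set {set 'I_n}}) (X Y : {set 'I_n}),
    (n0 <= n)%N ->
    is_3graph E ->
    [disjoint X & Y] ->
    closed_set E c eta X ->
    closed_set E c eta Y ->
    eps * (n%:R ^+ (4 * p + 1)) <= (num_bridges E p X Y)%:R ->
    closed_set E (2 * c + p) eta' (X :|: Y).
Proof.
move=> eta eps c p eta0 eps0.
set a := (4 * c - 1)%N; set b := (4 * p - 1)%N.
set K := Km (2 * a + b + 2).
set q1 : rat := 12%:R / eps.
set q2 : rat := (2 * (a + b + 4))%:R / eta.
exists (eps / 2 * (eta / 2) ^+ 2 / K.+1%:R), (Num.bound q1 + Num.bound q2)%N.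
split.
  apply: divr_gt0; last by rewrite ltr0n.
  apply: mulr_gt0; first lra.
  apply: exprn_gt0; lra.
move=> n E X Y hn _ hXY hX hY hbr.
have hq1 : q1 <= n%:R.
  apply: ltW; apply: lt_le_trans (archi_boundP _) _.
    by rewrite /q1 divr_ge0 // ?ler0n // ltW.
  by rewrite ler_nat; apply: leq_trans hn; rewrite leq_addr.
have hq2 : q2 <= n%:R.
  apply: ltW; apply: lt_le_trans (archi_boundP _) _.
    by rewrite /q2 divr_ge0 // ?ler0n // ltW.
  by rewrite ler_nat; apply: leq_trans hn; rewrite leq_addl.
have hn1 : 12%:R <= eps * n%:R.
  by move: hq1; rewrite /q1 ler_pdivrMr // mulrC.
have hn2 : (2 * (a + b + 4))%:R <= eta * n%:R.
  by move: hq2; rewrite /q2 ler_pdivrMr // mulrC.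
have npos : (0 < n)%N.
  rewrite lt0n; apply/negP => /eqP n0; rewrite n0 mulr0 in hn1.
  lra.
have Npos : (0 : rat) < n%:R by rewrite ltr0n.
have [t tB] : exists t, t \in [set t : 'I_n * 'I_n * {set 'I_n} |
      [&& t.1.1 \in X, t.1.2 \in Y & connector E p t.1.1 t.1.2 t.2]].
  apply/set0Pn; rewrite -card_gt0 -(ltr0n rat).
  apply: lt_le_trans hbr; apply: mulr_gt0 => //; exact: exprn_gt0.
move: tB; rewrite inE => /and3P [tX tY tC].
have p1 := connector_k1 tC.
have c1 : (1 <= c)%N.
  have := hX _ _ tX tX; rewrite /close => h.
  have : (0 : rat) < #|[set S | connector E c t.1.1 t.1.1 S]|%:R.
    apply: lt_le_trans h; apply: mulr_gt0 => //; exact: exprn_gt0.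
  rewrite ltr0n card_gt0 => /set0Pn [S]; rewrite inE; exact: connector_k1.
have ek := ar3 c1 p1.
have XY : forall u v, u \in X -> v \in Y ->
    close E (2 * c + p) (eps / 2 * (eta / 2) ^+ 2 / K.+1%:R) u v.
  move=> u v uX vY.
  apply: (@case_gen n E X Y c p eps eta u v
     (fun x' S => connector E c u x' S) (fun y' S => connector E c y' v S)) => //.
  - by move=> x' y' S hx hy _; apply: hX.
  - by move=> x' y' S hx hy _; apply: hY.
  - by move=> w S; exact: connector_size.
  - by move=> w S; exact: connector_size.
  move=> x' y' S S1 S2 hx hy hS h1 h2 s1 s2.
  have [f1 f1'] := conn_fac h1.
  have [f2 f2'] := conn_fac h2.
  have [f3 f3'] := conn_fac hS.
  apply: (conn_build (a := a) (b := b)) => //.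
  - exact: connector_size h1.
  - exact: connector_size hS.
  - exact: connector_size h2.
  - exact: assembleA.
  - exact: assembleB.
move=> u v; rewrite !inE => /orP [uX|uY] /orP [vX|vY].
- apply: (@case_gen n E X Y c p eps eta u v
     (fun x' S => connector E c u v S) (fun y' S => connector E c y' y' S)) => //.
  + by move=> x' y' S hx hy _; apply: hX.
  + by move=> x' y' S hx hy _; apply: hY.
  + by move=> w S; exact: connector_size.
  + by move=> w S; exact: connector_size.
  move=> x' y' S S1 S2 hx hy hS h1 h2 s1 s2.
  have [f1 f1'] := conn_fac h1.
  have [f2 f2'] := conn_fac h2.
  have [f3 f3'] := conn_fac hS.
  apply: (conn_build (a := a) (b := b)) => //.
  * exact: connector_size h1.
  * exact: connector_size hS.
  * exact: connector_size h2.
  * exact: assembleA.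
  * exact: assembleA.
- exact: XY.
- apply: close_sym; exact: XY.
- apply: (@case_gen n E X Y c p eps eta u v
     (fun x' S => connector E c x' x' S) (fun y' S => connector E c u v S)) => //.
  + by move=> x' y' S hx hy _; apply: hX.
  + by move=> x' y' S hx hy _; apply: hY.
  + by move=> w S; exact: connector_size.
  + by move=> w S; exact: connector_size.
  move=> x' y' S S1 S2 hx hy hS h1 h2 s1 s2.
  have [f1 f1'] := conn_fac h1.
  have [f2 f2'] := conn_fac h2.
  have [f3 f3'] := conn_fac hS.
  apply: (conn_build (a := a) (b := b)) => //.
  * exact: connector_size h1.
  * exact: connector_size hS.
  * exact: connector_size h2.
  * exact: assembleB.
  * exact: assembleB.
Qed.
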